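(* Let $q\ge2$ be an integer, $1-\frac1{2q}<\gamma<1$, $p\in\{0,\dots,q-2\}$, and $a,b,c,d\ge0$ integers with $a+b=c+d=q-1-p$. Then there is a constant $C$ such that for all $N\ge1$, $$N^{4q-4}\sum_{i,i',k,k'=0}^{N-1}\langle\mathbf 1_{\Delta i},\mathbf 1_{\Delta i'}\rangle^{p+1}_{\mathcal H^\gamma}\langle\mathbf 1_{\Delta k},\mathbf 1_{\Delta k'}\rangle^{p+1}_{\mathcal H^\gamma}\langle\mathbf 1_{\Delta i},\mathbf 1_{\Delta k}\rangle^{a}_{\mathcal H^\gamma}\langle\mathbf 1_{\Delta i},\mathbf 1_{\Delta k'}\rangle^{b}_{\mathcal H^\gamma}\langle\mathbf 1_{\Delta i'},\mathbf 1_{\Delta k}\rangle^{c}_{\mathcal H^\gamma}\langle\mathbf 1_{\Delta i'},\mathbf 1_{\Delta k'}\rangle^{d}_{\mathcal H^\gamma}\le C.$$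
   Context: $\mathcal H^\gamma$ is the closure of step functions on $[0,1]$ under $\langle \mathbf 1_{[0,s_1]},\mathbf 1_{[0,s_2]}\rangle_{\mathcal H^\gamma}=\frac12(s_1^{2\gamma}+s_2^{2\gamma}-|s_1-s_2|^{2\gamma})$. $\Delta i=[\frac iN,\frac{i+1}N]$, so $\langle\mathbf 1_{\Delta i},\mathbf 1_{\Delta i'}\rangle_{\mathcal H^\gamma}=\frac12N^{-2\gamma}(|i-i'+1|^{2\gamma}+|i-i'-1|^{2\gamma}-2|i-i'|^{2\gamma})$. *)

(* Defs.v *)
From Stdlib Require Import Reals.
Open Scope R_scope.

Definition abspow (x e : R) : R :=
  if Req_EM_T x 0 then 0 else Rpower (Rabs x) e.

(* <1_{Delta i}, 1_{Delta i'}>_{H^gamma}, Delta i = [i/N,(i+1)/N]: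
   1/2 N^{-2gamma} (|i-i'+1|^{2gamma} + |i-i'-1|^{2gamma} - 2|i-i'|^{2gamma}) *)
Definition ipH (gamma : R) (N i i' : nat) : R :=
  let j := INR i - INR i' in
  / 2 * Rpower (INR N) (- (2 * gamma)) *
  (abspow (j + 1) (2 * gamma) + abspow (j - 1) (2 * gamma)
   - 2 * abspow j (2 * gamma)).

Fixpoint sumN (N : nat) (f : nat -> R) : R :=
  match N with
  | O => 0
  | S n => sumN n f + f n
  end.

(* Main.v *)
Require Import Defs.
From Stdlib Require Import Reals Lra Lia List Arith.
Open Scope R_scope.


Lemma sumN_le (N : nat) (f g : nat -> R) :
  (forall i, (i < N)%nat -> f i <= g i) -> sumN N f <= sumN N g.
Proof.
  induction N as [|N IH]; intros H; simpl; [lra|].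
  apply Rplus_le_compat; [apply IH; intros; apply H; lia | apply H; lia].
Qed.

Lemma sumN_ext (N : nat) (f g : nat -> R) :
  (forall i, (i < N)%nat -> f i = g i) -> sumN N f = sumN N g.
Proof.
  induction N as [|N IH]; intros H; simpl; [lra|].
  rewrite IH by (intros; apply H; lia). rewrite H by lia. reflexivity.
Qed.

Lemma sumN_nonneg (N : nat) (f : nat -> R) :
  (forall i, (i < N)%nat -> 0 <= f i) -> 0 <= sumN N f.
Proof.
  induction N as [|N IH]; intros H; simpl; [lra|].
  assert (0 <= sumN N f) by (apply IH; intros; apply H; lia).
  assert (0 <= f N) by (apply H; lia). lra.
Qed.

Lemma sumN_plus (N : nat) (f g : nat -> R) :
  sumN N (fun i => f i + g i) = sumN N f + sumN N g.
Proof. induction N; simpl; [lra|]. rewrite IHN; ring. Qed.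

Lemma sumN_scal (N : nat) (c : R) (f : nat -> R) :
  sumN N (fun i => c * f i) = c * sumN N f.
Proof. induction N; simpl; [ring|]. rewrite IHN; ring. Qed.

Lemma sumN_const (N : nat) (c : R) : sumN N (fun _ => c) = INR N * c.
Proof. induction N; simpl sumN; [simpl; ring|]. rewrite IHN, S_INR; ring. Qed.

Lemma sumN_swap (N M : nat) (f : nat -> nat -> R) :
  sumN N (fun i => sumN M (fun j => f i j)) = sumN M (fun j => sumN N (fun i => f i j)).
Proof.
  induction N; simpl.
  - induction M; simpl; [reflexivity|]. rewrite <- IHM; ring.
  - rewrite IHN. rewrite <- sumN_plus. reflexivity.
Qed.

Lemma sumN_split (n m : nat) (f : nat -> R) :
  sumN (n + m) f = sumN n f + sumN m (fun j => f (n + j)%nat).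
Proof.
  induction m; simpl.
  - rewrite Nat.add_0_r; ring.
  - rewrite Nat.add_succ_r; simpl. rewrite IHm; ring.
Qed.

Lemma sumN_shift (n : nat) (f : nat -> R) :
  sumN (S n) f = f O + sumN n (fun j => f (S j)).
Proof.
  induction n; simpl in *; [ring|]. rewrite IHn; ring.
Qed.

Lemma sumN_rev (n : nat) (f : nat -> R) :
  sumN n (fun u => f (n - 1 - u)%nat) = sumN n f.
Proof.
  revert f. induction n; intros f; [reflexivity|].
  rewrite (sumN_shift n f). simpl sumN.
  replace (n - 0 - n)%nat with O by lia.
  rewrite (sumN_ext n (fun u => f (n - 0 - u)%nat) (fun u => (fun w => f (S w)) (n - 1 - u)%nat)).
  - rewrite (IHn (fun w => f (S w))). ring.
  - intros i Hi. f_equal. lia.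
Qed.

Lemma sumN_mono_len (n m : nat) (f : nat -> R) :
  (forall i, 0 <= f i) -> (n <= m)%nat -> sumN n f <= sumN m f.
Proof.
  intros H Hnm. induction Hnm; [lra|]. simpl. specialize (H m). lra.
Qed.


Definition S4 (N : nat) (h : nat -> nat -> nat -> nat -> R) : R :=
  sumN N (fun a => sumN N (fun b => sumN N (fun c => sumN N (fun d => h a b c d)))).
Definition S3 (N : nat) (h : nat -> nat -> nat -> R) : R :=
  sumN N (fun a => sumN N (fun b => sumN N (fun c => h a b c))).

Definition goodZ (N : nat) (Z : nat -> nat -> R) (T : R) :=
  (forall u v, 0 <= Z u v) /\ (forall u v, Z u v = Z v u) /\
  (forall v, (v < N)%nat -> sumN N (fun u => Z u v) <= T).

Lemma goodZ_row N Z T : goodZ N Z T -> forall u, (u < N)%nat -> sumN N (fun v => Z u v) <= T.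
Proof.
  intros [H0 [Hs HT]] u Hu. rewrite (sumN_ext N _ (fun v => Z v u)); [apply HT; auto|].
  intros; apply Hs.
Qed.

Lemma goodZ_T N Z T : (1 <= N)%nat -> goodZ N Z T -> 0 <= T.
Proof.
  intros HN [H0 [Hs HT]]. eapply Rle_trans; [|apply (HT O); lia].
  apply sumN_nonneg; auto.
Qed.

Lemma S4_swap34 N h : S4 N h = S4 N (fun a b c d => h a b d c).
Proof.
  unfold S4. apply sumN_ext; intros a _. apply sumN_ext; intros b _.
  apply sumN_swap.
Qed.

Lemma S4_swap23 N h : S4 N h = S4 N (fun a b c d => h a c b d).
Proof.
  unfold S4. apply sumN_ext; intros a _. apply sumN_swap.
Qed.

Lemma G1 N Z T (P : nat -> nat -> nat -> R) (W : nat -> nat -> nat -> nat) :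
  goodZ N Z T -> (forall a b c, 0 <= P a b c) ->
  (forall a b c, (a < N)%nat -> (b < N)%nat -> (c < N)%nat -> (W a b c < N)%nat) ->
  S4 N (fun a b c d => P a b c * Z (W a b c) d) <= T * S3 N P.
Proof.
  intros HZ HP HW. unfold S4, S3.
  rewrite <- sumN_scal. apply sumN_le; intros a Ha.
  rewrite <- sumN_scal. apply sumN_le; intros b Hb.
  rewrite <- sumN_scal. apply sumN_le; intros c Hc.
  rewrite sumN_scal. rewrite Rmult_comm. apply Rmult_le_compat_r; auto.
  apply (goodZ_row N Z T HZ). auto.
Qed.

Lemma G2 N Z T (f : nat -> nat -> nat) :
  goodZ N Z T ->
  (forall a b, (a < N)%nat -> (b < N)%nat -> (f a b < N)%nat) ->
  S3 N (fun a b c => Z (f a b) c) <= INR N * (INR N * T).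
Proof.
  intros HZ Hf. unfold S3.
  rewrite <- sumN_const. apply sumN_le; intros a Ha.
  rewrite <- sumN_const. apply sumN_le; intros b Hb.
  apply (goodZ_row N Z T HZ). auto.
Qed.

Lemma G3 N Z T :
  goodZ N Z T -> S3 N (fun a b c => Z a b) <= INR N * (INR N * T).
Proof.
  intros HZ. unfold S3.
  rewrite <- sumN_const. apply sumN_le; intros a Ha.
  rewrite (sumN_ext N _ (fun b => INR N * Z a b)) by (intros; apply sumN_const).
  rewrite sumN_scal. apply Rmult_le_compat_l; [apply pos_INR|].
  apply (goodZ_row N Z T HZ). auto.
Qed.

Lemma G4 N Z T (f : nat -> nat -> nat) :
  goodZ N Z T ->
  (forall a b, (a < N)%nat -> (b < N)%nat -> (f a b < N)%nat) ->
  S4 N (fun a b c d => Z a b * Z (f a b) c) <= INR N ^ 2 * T ^ 2.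
Proof.
  intros HZ Hf. pose proof HZ as [H0 [Hs HT]]. unfold S4.
  rewrite (sumN_ext N _ (fun a => INR N * sumN N (fun b => Z a b * sumN N (fun c => Z (f a b) c)))).
  2:{ intros a Ha. rewrite <- sumN_scal. apply sumN_ext; intros b Hb.
      rewrite (sumN_ext N _ (fun c => INR N * (Z a b * Z (f a b) c))) by (intros; apply sumN_const).
      rewrite sumN_scal. rewrite (sumN_scal N (Z a b) (fun c => Z (f a b) c)). ring. }
  replace (INR N ^ 2 * T ^ 2) with (INR N * (INR N * T * T)) by ring.
  rewrite <- (sumN_const N (INR N * T * T)). apply sumN_le; intros a Ha. rewrite Rmult_assoc.
  apply Rmult_le_compat_l; [apply pos_INR|].
  apply Rle_trans with (sumN N (fun b => Z a b * T)).
  - apply sumN_le; intros b Hb. apply Rmult_le_compat_l; auto.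
    apply (goodZ_row N Z T HZ); auto.
  - rewrite (sumN_ext N _ (fun b => T * Z a b)) by (intros; ring).
    rewrite sumN_scal.
    assert (0 <= T) by (apply (goodZ_T N Z T); auto; lia).
    apply Rmult_le_compat_l; auto. apply (goodZ_row N Z T HZ); auto.
Qed.

Lemma G13 N Z T (W : nat -> nat -> nat -> nat) : goodZ N Z T ->
  (forall a b c, (a < N)%nat -> (b < N)%nat -> (c < N)%nat -> (W a b c < N)%nat) ->
  S4 N (fun a b c d => Z a b * Z (W a b c) d) <= INR N ^ 2 * T ^ 2.
Proof.
  intros HZ HW. pose proof HZ as [H0 _].
  eapply Rle_trans; [apply (G1 N Z T (fun a b c => Z a b) W); auto|].
  pose proof (G3 N Z T HZ).
  destruct (le_lt_dec 1 N).
  - assert (0 <= T) by (apply (goodZ_T N Z T); auto). nra.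
  - assert (N = O) by lia. subst. unfold S3; simpl. nra.
Qed.

Lemma G12 N Z T (f : nat -> nat -> nat) (W : nat -> nat -> nat -> nat) : goodZ N Z T ->
  (forall a b, (a < N)%nat -> (b < N)%nat -> (f a b < N)%nat) ->
  (forall a b c, (a < N)%nat -> (b < N)%nat -> (c < N)%nat -> (W a b c < N)%nat) ->
  S4 N (fun a b c d => Z (f a b) c * Z (W a b c) d) <= INR N ^ 2 * T ^ 2.
Proof.
  intros HZ Hf HW. pose proof HZ as [H0 _].
  eapply Rle_trans; [apply (G1 N Z T (fun a b c => Z (f a b) c) W); auto|].
  pose proof (G2 N Z T f HZ Hf).
  destruct (le_lt_dec 1 N).
  - assert (0 <= T) by (apply (goodZ_T N Z T); auto). nra.
  - assert (N = O) by lia. subst. unfold S3; simpl. nra.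
Qed.


Definition Zt (Z : nat -> nat -> R) (e : nat) (a b c d : nat) : R :=
  match e with
  | 1%nat => Z a b | 2%nat => Z c d | 3%nat => Z a c
  | 4%nat => Z a d | 5%nat => Z b c | _ => Z b d end.

Import ListNotations.
Definition pairs : list (nat * nat) :=
  [(1,2);(1,3);(1,4);(1,5);(1,6);(2,3);(2,4);(2,5);(2,6);(3,4);(3,5);(3,6);(4,5);(4,6);(5,6)]%nat.

Definition PS (Z : nat -> nat -> R) (a b c d : nat) : R :=
  fold_right (fun pr acc => Zt Z (fst pr) a b c d * Zt Z (snd pr) a b c d + acc) 0 pairs.

Lemma S4_ext N h h' : (forall a b c d, h a b c d = h' a b c d) -> S4 N h = S4 N h'.
Proof.
  intros H. unfold S4. apply sumN_ext; intros. apply sumN_ext; intros.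
  apply sumN_ext; intros. apply sumN_ext; intros. apply H.
Qed.

Lemma S4_plus N f g : S4 N (fun a b c d => f a b c d + g a b c d) = S4 N f + S4 N g.
Proof.
  unfold S4. rewrite <- sumN_plus. apply sumN_ext; intros.
  rewrite <- sumN_plus. apply sumN_ext; intros.
  rewrite <- sumN_plus. apply sumN_ext; intros.
  rewrite <- sumN_plus. reflexivity.
Qed.

Lemma S4_zero N : S4 N (fun _ _ _ _ => 0) = 0.
Proof.
  unfold S4. rewrite (sumN_ext N _ (fun _ => 0 * 0)). rewrite sumN_const; ring.
  intros. rewrite (sumN_ext N _ (fun _ => 0 * 0)). rewrite sumN_const; ring.
  intros. rewrite (sumN_ext N _ (fun _ => 0 * 0)). rewrite sumN_const; ring.
  intros. rewrite (sumN_ext N _ (fun _ => 0 * 0)). rewrite sumN_const; ring.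
  intros; ring.
Qed.

Lemma S4_list N Z B (l : list (nat * nat)) :
  (forall pr, In pr l -> S4 N (fun a b c d => Zt Z (fst pr) a b c d * Zt Z (snd pr) a b c d) <= B) ->
  S4 N (fun a b c d => fold_right (fun pr acc => Zt Z (fst pr) a b c d * Zt Z (snd pr) a b c d + acc) 0 l)
  <= INR (length l) * B.
Proof.
  induction l as [|pr l IH]; intros H.
  - simpl. rewrite S4_zero. lra.
  - simpl fold_right. rewrite S4_plus. simpl length. rewrite S_INR.
    assert (H1 := H pr (or_introl eq_refl)).
    assert (H2 : S4 N (fun a b c d => fold_right (fun pr acc => Zt Z (fst pr) a b c d * Zt Z (snd pr) a b c d + acc) 0 l) <= INR (length l) * B)
      by (apply IH; intros; apply H; right; auto).
    lra.
Qed.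

Lemma PS_bound N Z T : goodZ N Z T ->
  S4 N (PS Z) <= 15 * (INR N ^ 2 * T ^ 2).
Proof.
  intros HZ. pose proof HZ as [H0 [Hs _]].
  replace 15 with (INR (length pairs)) by (simpl; lra).
  apply S4_list. intros pr Hin.
  simpl in Hin.
  repeat destruct Hin as [<-|Hin]; [..|contradiction]; simpl fst; simpl snd; unfold Zt.
  - apply (G13 N Z T (fun a b c => c)); auto.
  - apply (G4 N Z T (fun a b => a)); auto.
  - apply (G13 N Z T (fun a b c => a)); auto.
  - apply (G4 N Z T (fun a b => b)); auto.
  - apply (G13 N Z T (fun a b c => b)); auto.
  -
    rewrite (S4_ext N _ (fun a b c d => Z a c * Z c d)) by (intros; ring).
    apply (G12 N Z T (fun a b => a) (fun a b c => c)); auto.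
  -
    rewrite S4_swap34.
    rewrite (S4_ext N _ (fun a b c d => Z a c * Z c d)) by (intros; rewrite (Hs d c); ring).
    apply (G12 N Z T (fun a b => a) (fun a b c => c)); auto.
  -
    rewrite (S4_ext N _ (fun a b c d => Z b c * Z c d)) by (intros; ring).
    apply (G12 N Z T (fun a b => b) (fun a b c => c)); auto.
  -
    rewrite S4_swap34.
    rewrite (S4_ext N _ (fun a b c d => Z b c * Z c d)) by (intros; rewrite (Hs d c); ring).
    apply (G12 N Z T (fun a b => b) (fun a b c => c)); auto.
  -
    apply (G12 N Z T (fun a b => a) (fun a b c => a)); auto.
  -
    rewrite S4_swap23.
    rewrite (S4_ext N _ (fun a b c d => Z a b * Z b c)) by (intros; rewrite (Hs c b); ring).
    apply (G4 N Z T (fun a b => b)); auto.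
  -
    apply (G12 N Z T (fun a b => a) (fun a b c => b)); auto.
  -
    rewrite (S4_ext N _ (fun a b c d => Z b c * Z a d)) by (intros; ring).
    apply (G12 N Z T (fun a b => b) (fun a b c => a)); auto.
  -
    rewrite S4_swap34. rewrite S4_swap23.
    rewrite (S4_ext N _ (fun a b c d => Z a b * Z b c)) by (intros; rewrite (Hs c b); ring).
    apply (G4 N Z T (fun a b => b)); auto.
  -
    apply (G12 N Z T (fun a b => b) (fun a b c => b)); auto.
Qed.


Lemma Rmax_pow_le (x y : R) (n : nat) : 0 <= x -> 0 <= y -> Rmax x y ^ n <= x ^ n + y ^ n.
Proof.
  intros Hx Hy. unfold Rmax. destruct (Rle_dec x y).
  - pose proof (pow_le x n Hx). lra.
  - pose proof (pow_le y n Hy). lra.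
Qed.

Lemma core6 (q : nat) (x y2 y3 y4 y5 y6 : R) (m1 m2 m3 m4 m5 m6 : nat) :
  0 <= x -> 0 <= y2 -> 0 <= y3 -> 0 <= y4 -> 0 <= y5 -> 0 <= y6 ->
  y2 <= x -> y3 <= x -> y4 <= x -> y5 <= x -> y6 <= x ->
  (m1 <= q)%nat -> (m1 + m2 + m3 + m4 + m5 + m6 = 2 * q)%nat ->
  x ^ m1 * y2 ^ m2 * y3 ^ m3 * y4 ^ m4 * y5 ^ m5 * y6 ^ m6 <=
  x ^ q * (y2 ^ q + y3 ^ q + y4 ^ q + y5 ^ q + y6 ^ q).
Proof.
  intros H1 H2 H3 H4 H5 H6 L2 L3 L4 L5 L6 Hm Hs.
  set (B := Rmax y2 (Rmax y3 (Rmax y4 (Rmax y5 y6)))).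
  assert (HB2 : y2 <= B) by (unfold B; apply Rmax_l).
  assert (HB3 : y3 <= B) by (unfold B; eapply Rle_trans; [|apply Rmax_r]; apply Rmax_l).
  assert (HB4 : y4 <= B) by (unfold B; eapply Rle_trans; [|apply Rmax_r];
     eapply Rle_trans; [|apply Rmax_r]; apply Rmax_l).
  assert (HB5 : y5 <= B) by (unfold B; eapply Rle_trans; [|apply Rmax_r];
     eapply Rle_trans; [|apply Rmax_r]; eapply Rle_trans; [|apply Rmax_r]; apply Rmax_l).
  assert (HB6 : y6 <= B) by (unfold B; eapply Rle_trans; [|apply Rmax_r];
     eapply Rle_trans; [|apply Rmax_r]; eapply Rle_trans; [|apply Rmax_r]; apply Rmax_r).
  assert (HBx : B <= x) by (unfold B; repeat apply Rmax_lub; auto).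
  assert (HB0 : 0 <= B) by lra.
  assert (Hbq : B ^ q <= y2 ^ q + y3 ^ q + y4 ^ q + y5 ^ q + y6 ^ q).
  { unfold B.
    assert (K6 : 0 <= Rmax y5 y6) by (eapply Rle_trans; [apply H5|apply Rmax_l]).
    assert (K7 : 0 <= Rmax y4 (Rmax y5 y6)) by (eapply Rle_trans; [apply H4|apply Rmax_l]).
    assert (K8 : 0 <= Rmax y3 (Rmax y4 (Rmax y5 y6))) by (eapply Rle_trans; [apply H3|apply Rmax_l]).
    pose proof (Rmax_pow_le y2 _ q H2 K8).
    pose proof (Rmax_pow_le y3 _ q H3 K7).
    pose proof (Rmax_pow_le y4 _ q H4 K6).
    pose proof (Rmax_pow_le y5 _ q H5 H6). lra. }
  apply Rle_trans with (x ^ m1 * B ^ m2 * B ^ m3 * B ^ m4 * B ^ m5 * B ^ m6).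
  { assert (P2 : y2 ^ m2 <= B ^ m2) by (apply pow_incr; lra).
    assert (P3 : y3 ^ m3 <= B ^ m3) by (apply pow_incr; lra).
    assert (P4 : y4 ^ m4 <= B ^ m4) by (apply pow_incr; lra).
    assert (P5 : y5 ^ m5 <= B ^ m5) by (apply pow_incr; lra).
    assert (P6 : y6 ^ m6 <= B ^ m6) by (apply pow_incr; lra).
    repeat apply Rmult_le_compat; try exact (Rle_refl _); try assumption;
      repeat apply Rmult_le_pos; apply pow_le; lra. }
  rewrite !Rmult_assoc, <- !pow_add.
  replace (m2 + (m3 + (m4 + (m5 + m6))))%nat with ((q - m1) + q)%nat by lia.
  rewrite pow_add, <- Rmult_assoc.
  replace (x ^ q) with (x ^ m1 * x ^ (q - m1)) by (rewrite <- pow_add; f_equal; lia).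
  apply Rmult_le_compat.
  - apply Rmult_le_pos; apply pow_le; lra.
  - apply pow_le; lra.
  - apply Rmult_le_compat_l; [apply pow_le; lra|]. apply pow_incr; lra.
  - exact Hbq.
Qed.

Lemma max6 (y1 y2 y3 y4 y5 y6 : R) :
  (y2 <= y1 /\ y3 <= y1 /\ y4 <= y1 /\ y5 <= y1 /\ y6 <= y1) \/
  (y1 <= y2 /\ y3 <= y2 /\ y4 <= y2 /\ y5 <= y2 /\ y6 <= y2) \/
  (y1 <= y3 /\ y2 <= y3 /\ y4 <= y3 /\ y5 <= y3 /\ y6 <= y3) \/
  (y1 <= y4 /\ y2 <= y4 /\ y3 <= y4 /\ y5 <= y4 /\ y6 <= y4) \/
  (y1 <= y5 /\ y2 <= y5 /\ y3 <= y5 /\ y4 <= y5 /\ y6 <= y5) \/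
  (y1 <= y6 /\ y2 <= y6 /\ y3 <= y6 /\ y4 <= y6 /\ y5 <= y6).
Proof.
  set (M := Rmax y1 (Rmax y2 (Rmax y3 (Rmax y4 (Rmax y5 y6))))).
  assert (C : M = y1 \/ M = y2 \/ M = y3 \/ M = y4 \/ M = y5 \/ M = y6).
  { assert (RC : forall a b, Rmax a b = a \/ Rmax a b = b)
      by (intros a0 b0; unfold Rmax; destruct Rle_dec; auto).
    unfold M.
    destruct (RC y1 (Rmax y2 (Rmax y3 (Rmax y4 (Rmax y5 y6))))) as [E|E]; rewrite E; [tauto|].
    destruct (RC y2 (Rmax y3 (Rmax y4 (Rmax y5 y6)))) as [E2|E2]; rewrite E2; [tauto|].
    destruct (RC y3 (Rmax y4 (Rmax y5 y6))) as [E3|E3]; rewrite E3; [tauto|].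
    destruct (RC y4 (Rmax y5 y6)) as [E4|E4]; rewrite E4; [tauto|].
    destruct (RC y5 y6) as [E5|E5]; rewrite E5; tauto. }
  assert (B1 : y1 <= M) by (unfold M; apply Rmax_l).
  assert (B2 : y2 <= M) by (unfold M; eapply Rle_trans; [|apply Rmax_r]; apply Rmax_l).
  assert (B3 : y3 <= M) by (unfold M; eapply Rle_trans; [|apply Rmax_r];
     eapply Rle_trans; [|apply Rmax_r]; apply Rmax_l).
  assert (B4 : y4 <= M) by (unfold M; eapply Rle_trans; [|apply Rmax_r];
     eapply Rle_trans; [|apply Rmax_r]; eapply Rle_trans; [|apply Rmax_r]; apply Rmax_l).
  assert (B5 : y5 <= M) by (unfold M; eapply Rle_trans; [|apply Rmax_r];
     eapply Rle_trans; [|apply Rmax_r]; eapply Rle_trans; [|apply Rmax_r];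
     eapply Rle_trans; [|apply Rmax_r]; apply Rmax_l).
  assert (B6 : y6 <= M) by (unfold M; eapply Rle_trans; [|apply Rmax_r];
     eapply Rle_trans; [|apply Rmax_r]; eapply Rle_trans; [|apply Rmax_r];
     eapply Rle_trans; [|apply Rmax_r]; apply Rmax_r).
  clearbody M.
  destruct C as [C|[C|[C|[C|[C|C]]]]]; subst M;
  [left|right;left|right;right;left|right;right;right;left|right;right;right;right;left|
   right;right;right;right;right]; repeat split; assumption.
Qed.

Lemma six (q : nat) (y1 y2 y3 y4 y5 y6 : R) (m1 m2 m3 m4 m5 m6 : nat) :
  0 <= y1 -> 0 <= y2 -> 0 <= y3 -> 0 <= y4 -> 0 <= y5 -> 0 <= y6 ->
  (m1 <= q)%nat -> (m2 <= q)%nat -> (m3 <= q)%nat -> (m4 <= q)%nat -> (m5 <= q)%nat -> (m6 <= q)%nat ->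
  (m1 + m2 + m3 + m4 + m5 + m6 = 2 * q)%nat ->
  y1^m1*y2^m2*y3^m3*y4^m4*y5^m5*y6^m6 <= y1^q*y2^q + y1^q*y3^q + y1^q*y4^q + y1^q*y5^q + y1^q*y6^q + y2^q*y3^q + y2^q*y4^q + y2^q*y5^q + y2^q*y6^q + y3^q*y4^q + y3^q*y5^q + y3^q*y6^q + y4^q*y5^q + y4^q*y6^q + y5^q*y6^q.
Proof.
  intros H1 H2 H3 H4 H5 H6 M1 M2 M3 M4 M5 M6 Hs.
  assert (Z1 : 0 <= y1^q) by (apply pow_le; lra).
  assert (Z2 : 0 <= y2^q) by (apply pow_le; lra).
  assert (Z3 : 0 <= y3^q) by (apply pow_le; lra).
  assert (Z4 : 0 <= y4^q) by (apply pow_le; lra).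
  assert (Z5 : 0 <= y5^q) by (apply pow_le; lra).
  assert (Z6 : 0 <= y6^q) by (apply pow_le; lra).
  destruct (max6 y1 y2 y3 y4 y5 y6) as [[L2 [L3 [L4 [L5 L6]]]]|HM].
  { pose proof (core6 q y1 y2 y3 y4 y5 y6 m1 m2 m3 m4 m5 m6) as Hc.
    assert (E : y1^m1*y2^m2*y3^m3*y4^m4*y5^m5*y6^m6 = y1^m1*y2^m2*y3^m3*y4^m4*y5^m5*y6^m6) by ring. try rewrite E.
    eapply Rle_trans; [apply Hc; auto; lia|].
    clear -Z1 Z2 Z3 Z4 Z5 Z6. revert Z1 Z2 Z3 Z4 Z5 Z6.
    generalize (y1^q) (y2^q) (y3^q) (y4^q) (y5^q) (y6^q). intros. nra. }
  destruct HM as [[L1 [L3 [L4 [L5 L6]]]]|HM].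
  { pose proof (core6 q y2 y1 y3 y4 y5 y6 m2 m1 m3 m4 m5 m6) as Hc.
    assert (E : y1^m1*y2^m2*y3^m3*y4^m4*y5^m5*y6^m6 = y2^m2*y1^m1*y3^m3*y4^m4*y5^m5*y6^m6) by ring. try rewrite E.
    eapply Rle_trans; [apply Hc; auto; lia|].
    clear -Z1 Z2 Z3 Z4 Z5 Z6. revert Z1 Z2 Z3 Z4 Z5 Z6.
    generalize (y1^q) (y2^q) (y3^q) (y4^q) (y5^q) (y6^q). intros. nra. }
  destruct HM as [[L1 [L2 [L4 [L5 L6]]]]|HM].
  { pose proof (core6 q y3 y1 y2 y4 y5 y6 m3 m1 m2 m4 m5 m6) as Hc.
    assert (E : y1^m1*y2^m2*y3^m3*y4^m4*y5^m5*y6^m6 = y3^m3*y1^m1*y2^m2*y4^m4*y5^m5*y6^m6) by ring. try rewrite E.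
    eapply Rle_trans; [apply Hc; auto; lia|].
    clear -Z1 Z2 Z3 Z4 Z5 Z6. revert Z1 Z2 Z3 Z4 Z5 Z6.
    generalize (y1^q) (y2^q) (y3^q) (y4^q) (y5^q) (y6^q). intros. nra. }
  destruct HM as [[L1 [L2 [L3 [L5 L6]]]]|HM].
  { pose proof (core6 q y4 y1 y2 y3 y5 y6 m4 m1 m2 m3 m5 m6) as Hc.
    assert (E : y1^m1*y2^m2*y3^m3*y4^m4*y5^m5*y6^m6 = y4^m4*y1^m1*y2^m2*y3^m3*y5^m5*y6^m6) by ring. try rewrite E.
    eapply Rle_trans; [apply Hc; auto; lia|].
    clear -Z1 Z2 Z3 Z4 Z5 Z6. revert Z1 Z2 Z3 Z4 Z5 Z6.
    generalize (y1^q) (y2^q) (y3^q) (y4^q) (y5^q) (y6^q). intros. nra. }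
  destruct HM as [[L1 [L2 [L3 [L4 L6]]]]|HM].
  { pose proof (core6 q y5 y1 y2 y3 y4 y6 m5 m1 m2 m3 m4 m6) as Hc.
    assert (E : y1^m1*y2^m2*y3^m3*y4^m4*y5^m5*y6^m6 = y5^m5*y1^m1*y2^m2*y3^m3*y4^m4*y6^m6) by ring. try rewrite E.
    eapply Rle_trans; [apply Hc; auto; lia|].
    clear -Z1 Z2 Z3 Z4 Z5 Z6. revert Z1 Z2 Z3 Z4 Z5 Z6.
    generalize (y1^q) (y2^q) (y3^q) (y4^q) (y5^q) (y6^q). intros. nra. }
  destruct HM as [L1 [L2 [L3 [L4 L5]]]].
  { pose proof (core6 q y6 y1 y2 y3 y4 y5 m6 m1 m2 m3 m4 m5) as Hc.
    assert (E : y1^m1*y2^m2*y3^m3*y4^m4*y5^m5*y6^m6 = y6^m6*y1^m1*y2^m2*y3^m3*y4^m4*y5^m5) by ring. try rewrite E.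
    eapply Rle_trans; [apply Hc; auto; lia|].
    clear -Z1 Z2 Z3 Z4 Z5 Z6. revert Z1 Z2 Z3 Z4 Z5 Z6.
    generalize (y1^q) (y2^q) (y3^q) (y4^q) (y5^q) (y6^q). intros. nra. }
Qed.


Lemma Rpower_1_l y : Rpower 1 y = 1.
Proof. unfold Rpower. rewrite ln_1, Rmult_0_r. apply exp_0. Qed.

Lemma Rpower_pos x y : 0 < Rpower x y.
Proof. unfold Rpower. apply exp_pos. Qed.

Lemma ln_le' a b : 0 < a -> a <= b -> ln a <= ln b.
Proof.
  intros Ha [Hab|Hab]; [left; apply ln_increasing; auto | subst; lra].
Qed.

Lemma exp_le' a b : a <= b -> exp a <= exp b.
Proof. intros [H|H]; [left; apply exp_increasing; auto| subst; lra]. Qed.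

Lemma Rpower_le_neg a b y : 0 < a -> a <= b -> y <= 0 -> Rpower b y <= Rpower a y.
Proof.
  intros Ha Hab Hy. unfold Rpower. apply exp_le'.
  pose proof (ln_le' a b Ha Hab). nra.
Qed.

Lemma Rpower_le_pos a b y : 0 < a -> a <= b -> 0 <= y -> Rpower a y <= Rpower b y.
Proof.
  intros Ha Hab Hy. unfold Rpower. apply exp_le'.
  pose proof (ln_le' a b Ha Hab). nra.
Qed.

Lemma abspow_opp x e : abspow (- x) e = abspow x e.
Proof.
  unfold abspow. destruct (Req_EM_T (- x) 0), (Req_EM_T x 0); try lra.
  rewrite Rabs_Ropp. reflexivity.
Qed.

Lemma abspow_pos x e : 0 < x -> abspow x e = Rpower x e.
Proof.
  intros Hx. unfold abspow. destruct (Req_EM_T x 0); [lra|].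
  rewrite Rabs_pos_eq by lra. reflexivity.
Qed.

Lemma abspow_0 e : abspow 0 e = 0.
Proof. unfold abspow. destruct (Req_EM_T 0 0); [reflexivity|lra]. Qed.

Definition Rf (g x : R) : R :=
  abspow (x + 1) (2 * g) + abspow (x - 1) (2 * g) - 2 * abspow x (2 * g).

Lemma Rf_even g x : Rf g (- x) = Rf g x.
Proof.
  unfold Rf. replace (- x + 1) with (- (x - 1)) by ring.
  replace (- x - 1) with (- (x + 1)) by ring.
  rewrite !abspow_opp. ring.
Qed.

Lemma ipH_Rf g N i j : ipH g N i j = / 2 * Rpower (INR N) (- (2 * g)) * Rf g (INR i - INR j).
Proof. reflexivity. Qed.

Lemma ipH_sym g N i j : ipH g N i j = ipH g N j i.
Proof.
  rewrite !ipH_Rf. replace (INR i - INR j) with (- (INR j - INR i)) by ring.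
  rewrite Rf_even. reflexivity.
Qed.

Lemma deriv_shift s t : 0 < t ->
  derivable_pt_lim (fun t => Rpower (t + 1) s) t (s * Rpower (t + 1) (s - 1)).
Proof.
  intros Ht.
  replace (s * Rpower (t + 1) (s - 1)) with ((s * Rpower (t + 1) (s - 1)) * (1 + 0)) by ring.
  apply (derivable_pt_lim_comp (fun t => t + 1) (fun x => Rpower x s)).
  - apply (derivable_pt_lim_plus id (fct_cte 1)).
    + apply derivable_pt_lim_id.
    + apply derivable_pt_lim_const.
  - apply derivable_pt_lim_power. lra.
Qed.

Lemma second_diff s x : 1 < s < 2 -> 2 <= x ->
  0 <= Rpower (x + 1) s + Rpower (x - 1) s - 2 * Rpower x s <= s * (s - 1) * Rpower (x - 1) (s - 2).
Proof.
  intros Hs Hx.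
  set (phi := fun t => Rpower (t + 1) s - Rpower t s).
  set (phi' := fun t => s * Rpower (t + 1) (s - 1) - s * Rpower t (s - 1)).
  destruct (MVT_cor2 phi phi' (x - 1) x) as [c [Hc1 Hc2]]; [lra| |].
  { intros c Hc. unfold phi, phi'.
    apply (derivable_pt_lim_minus (fun t => Rpower (t + 1) s) (fun t => Rpower t s)).
    - apply deriv_shift. lra.
    - apply derivable_pt_lim_power. lra. }
  set (psi := fun t => Rpower t (s - 1)).
  set (psi' := fun t => (s - 1) * Rpower t (s - 1 - 1)).
  destruct (MVT_cor2 psi psi' c (c + 1)) as [e [He1 He2]]; [lra| |].
  { intros c' Hc'. unfold psi, psi'. apply derivable_pt_lim_power. lra. }
  unfold phi, phi', psi, psi' in *.
  replace (Rpower (x + 1) s + Rpower (x - 1) s - 2 * Rpower x s)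
    with (Rpower (x + 1) s - Rpower x s - (Rpower (x - 1 + 1) s - Rpower (x - 1) s))
    by (replace (x - 1 + 1) with x by ring; ring).
  rewrite Hc1.
  replace (s * Rpower (c + 1) (s - 1) - s * Rpower c (s - 1)) with
    (s * (Rpower (c + 1) (s - 1) - Rpower c (s - 1))) by ring.
  rewrite He1.
  replace (s - 1 - 1) with (s - 2) by ring.
  assert (P : 0 < Rpower e (s - 2)) by apply Rpower_pos.
  assert (Q : Rpower e (s - 2) <= Rpower (x - 1) (s - 2)).
  { apply Rpower_le_neg; lra. }
  split.
  - replace (x - (x - 1)) with 1 by ring. replace (c + 1 - c) with 1 by ring.
    assert (0 <= (s - 1) * Rpower e (s - 2)) by nra. nra.
  - replace (x - (x - 1)) with 1 by ring. replace (c + 1 - c) with 1 by ring.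
    assert (0 < s * (s - 1)) by nra. nra.
Qed.

Definition gg (g : R) (n : nat) : R :=
  if (n <=? 1)%nat then 1 else Rpower (INR n - 1) (2 * g - 2).

Lemma gg_pos g n : 0 < gg g n.
Proof. unfold gg. destruct (n <=? 1)%nat; [lra|apply Rpower_pos]. Qed.

Lemma Rf_bound g n : 1/2 < g < 1 -> Rabs (Rf g (INR n)) <= 2 * gg g n.
Proof.
  intros Hg. unfold gg.
  destruct n as [|[|n]].
  - simpl INR. unfold Rf. replace (0 + 1) with 1 by ring. replace (0 - 1) with (- 1) by ring.
    replace (abspow (-1) (2*g)) with (abspow 1 (2*g)) by (rewrite <- abspow_opp; f_equal; ring).
    rewrite abspow_0, abspow_pos, Rpower_1_l by lra. simpl Nat.leb. cbv iota.
    rewrite Rabs_pos_eq; lra.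
  - simpl INR. unfold Rf. replace (1 + 1) with 2 by ring. replace (1 - 1) with 0 by ring.
    rewrite abspow_0, (abspow_pos 1), Rpower_1_l, abspow_pos by lra. simpl Nat.leb. cbv iota.
    assert (H4 : Rpower 2 (2 * g) <= 4).
    { replace 4 with (Rpower 2 (INR 2)).
      - apply Rle_Rpower; [lra|]. simpl. lra.
      - rewrite Rpower_pow by lra. simpl; ring. }
    pose proof (Rpower_pos 2 (2 * g)).
    apply Rabs_le; lra.
  - assert (Hn : (S (S n) <=? 1)%nat = false) by reflexivity. rewrite Hn.
    assert (Hx : 2 <= INR (S (S n))) by (rewrite !S_INR; pose proof (pos_INR n); lra).
    pose proof (second_diff (2 * g) (INR (S (S n))) ltac:(lra) Hx) as [A B].
    unfold Rf. rewrite !abspow_pos by lra.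
    assert (0 < 2 * g * (2 * g - 1) < 2) by nra.
    pose proof (Rpower_pos (INR (S (S n)) - 1) (2 * g - 2)).
    rewrite Rabs_pos_eq by lra. nra.
Qed.


Lemma dist_sum (F : R -> R) (G : nat -> R) (N v : nat) :
  (forall x, 0 <= F x) -> (forall x, F (- x) = F x) ->
  (forall n, 0 <= G n) -> (forall n, F (INR n) <= G n) -> (v < N)%nat ->
  sumN N (fun u => F (INR u - INR v)) <= 2 * sumN N G.
Proof.
  intros HF0 HFe HG0 HFG Hv.
  replace N with (v + (N - v))%nat at 1 by lia.
  rewrite sumN_split.
  assert (A1 : sumN (N - v) (fun j => F (INR (v + j) - INR v)) <= sumN N G).
  { apply Rle_trans with (sumN (N - v) G).
    - apply sumN_le; intros j _. rewrite plus_INR.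
      replace (INR v + INR j - INR v) with (INR j) by ring. apply HFG.
    - apply sumN_mono_len; auto; lia. }
  assert (A2 : sumN v (fun u => F (INR u - INR v)) <= sumN N G).
  { rewrite <- (sumN_rev v (fun u => F (INR u - INR v))).
    apply Rle_trans with (sumN v (fun u => G (S u))).
    - apply sumN_le; intros u Hu.
      replace (INR (v - 1 - u) - INR v) with (- INR (S u)).
      + rewrite HFe. apply HFG.
      + rewrite minus_INR by lia. rewrite minus_INR by lia. rewrite S_INR. simpl. ring.
    - apply Rle_trans with (sumN (S v) G).
      + rewrite sumN_shift. specialize (HG0 O). lra.
      + apply sumN_mono_len; auto. }
  lra.
Qed.

Lemma power_sum (beta : R) (N : nat) : 0 < beta < 1 -> (1 <= N)%nat ->
  sumN N (fun m => Rpower (INR m + 1) (- beta)) <= Rpower (INR N) (1 - beta) / (1 - beta).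
Proof.
  intros Hb HN. induction HN as [|N HN IH].
  - simpl. replace (0 + 1) with 1 by ring. rewrite !Rpower_1_l.
    unfold Rdiv. rewrite Rmult_1_l, Rplus_0_l. rewrite <- Rinv_1 at 1.
    apply Rinv_le_contravar; lra.
  - simpl sumN.
    assert (HNp : 1 <= INR N) by (apply (le_INR 1); auto).
    destruct (MVT_cor2 (fun t => Rpower t (1 - beta)) (fun t => (1 - beta) * Rpower t (1 - beta - 1))
                 (INR N) (INR N + 1)) as [c [Hc1 Hc2]]; [lra| |].
    { intros c Hc. apply derivable_pt_lim_power. lra. }
    rewrite S_INR.
    replace (1 - beta - 1) with (- beta) in Hc1 by ring.
    replace (INR N + 1 - INR N) with 1 in Hc1 by ring.
    assert (Q : Rpower (INR N + 1) (- beta) <= Rpower c (- beta)) by (apply Rpower_le_neg; lra).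
    assert (E : Rpower (INR N + 1) (1 - beta) / (1 - beta) =
                Rpower (INR N) (1 - beta) / (1 - beta) + Rpower c (- beta)).
    { apply (Rmult_eq_reg_r (1 - beta)); [|lra]. unfold Rdiv.
      rewrite Rmult_plus_distr_r, !Rmult_assoc, Rinv_l by lra. lra. }
    rewrite E. lra.
Qed.

Lemma Rpower_pow_q x y n : 0 < x -> Rpower x y ^ n = Rpower x (y * INR n).
Proof.
  intros Hx. rewrite <- Rpower_pow by apply Rpower_pos. apply Rpower_mult.
Qed.

Lemma gg_sum (gamma : R) (q N : nat) :
  sumN N (fun j => gg gamma j ^ q) <=
  2 + sumN N (fun m => Rpower (INR m + 1) (- ((2 - 2 * gamma) * INR q))).
Proof.
  assert (Hr : forall m, 0 <= Rpower (INR m + 1) (- ((2 - 2 * gamma) * INR q)))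
    by (intros; left; apply Rpower_pos).
  destruct N as [|[|n]].
  - simpl. lra.
  - cbn [sumN]. unfold gg. simpl Nat.leb. cbv iota. rewrite pow1. specialize (Hr O). lra.
  - replace (S (S n)) with (2 + n)%nat by lia. rewrite sumN_split.
    simpl (sumN 2 _). unfold gg at 1 2. simpl Nat.leb. cbv iota. rewrite !pow1.
    assert (sumN n (fun j => gg gamma (2 + j) ^ q) <=
            sumN (2 + n) (fun m => Rpower (INR m + 1) (- ((2 - 2 * gamma) * INR q)))).
    { apply Rle_trans with (sumN n (fun m => Rpower (INR m + 1) (- ((2 - 2 * gamma) * INR q)))).
      - right. apply sumN_ext; intros j _. unfold gg.
        replace ((2 + j) <=? 1)%nat with false by reflexivity.
        rewrite Rpower_pow_q.
        + f_equal. rewrite plus_INR. simpl. ring. ring.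
        + rewrite plus_INR. simpl. pose proof (pos_INR j). lra.
      - apply sumN_mono_len; auto. lia. }
    lra.
Qed.

Lemma row_bound (gamma : R) (q : nat) :
  1/2 < gamma < 1 -> 0 < (2 - 2 * gamma) * INR q < 1 ->
  exists K, 0 <= K /\ forall N v, (1 <= N)%nat -> (v < N)%nat ->
   sumN N (fun u => Rabs (ipH gamma N u v) ^ q) <= K * Rpower (INR N) (1 - 2 * INR q).
Proof.
  intros Hg Hb. set (beta := (2 - 2 * gamma) * INR q) in *.
  exists ((/2) ^ q * (2 * 2 ^ q * (2 + / (1 - beta)))).
  split.
  { apply Rmult_le_pos; [apply pow_le; lra|].
    apply Rmult_le_pos; [apply Rmult_le_pos; [lra|apply pow_le; lra]|].
    assert (0 < / (1 - beta)) by (apply Rinv_0_lt_compat; lra). lra. }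
  intros N v HN Hv.
  assert (HN1 : 1 <= INR N) by (apply (le_INR 1); auto).
  set (F := fun x => Rabs (Rf gamma x) ^ q).
  rewrite (sumN_ext N _ (fun u => (/2) ^ q * Rpower (INR N) (- (2 * gamma) * INR q) * F (INR u - INR v))).
  2:{ intros u _. rewrite ipH_Rf. unfold F.
      rewrite !Rabs_mult, (Rabs_pos_eq (/2)) by lra.
      rewrite (Rabs_pos_eq (Rpower _ _)) by (left; apply Rpower_pos).
      rewrite !Rpow_mult_distr. rewrite Rpower_pow_q by lra. reflexivity. }
  rewrite sumN_scal.
  assert (HS : sumN N (fun u => F (INR u - INR v)) <= 2 * sumN N (fun n => 2 ^ q * gg gamma n ^ q)).
  { apply dist_sum; auto.
    - intros x. unfold F. apply pow_le, Rabs_pos.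
    - intros x. unfold F. rewrite Rf_even. reflexivity.
    - intros n. apply Rmult_le_pos; apply pow_le; [lra|]. left; apply gg_pos.
    - intros n. unfold F. rewrite <- Rpow_mult_distr. apply pow_incr.
      split; [apply Rabs_pos|]. apply Rf_bound; lra. }
  rewrite sumN_scal in HS.
  pose proof (gg_sum gamma q N) as HG. fold beta in HG.
  pose proof (power_sum beta N ltac:(lra) HN) as HP.
  set (X := Rpower (INR N) (1 - beta)) in *.
  assert (HX1 : 1 <= X).
  { unfold X. rewrite <- (Rpower_O (INR N)) at 1 by lra. apply Rle_Rpower; lra. }
  assert (Hinv : 0 < / (1 - beta)) by (apply Rinv_0_lt_compat; lra).
  assert (HXb : 2 + X / (1 - beta) <= (2 + / (1 - beta)) * X).
  { unfold Rdiv. nra. }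
  assert (E : Rpower (INR N) (- (2 * gamma) * INR q) * X = Rpower (INR N) (1 - 2 * INR q)).
  { unfold X. rewrite <- Rpower_plus. f_equal. unfold beta. ring. }
  assert (P1 : 0 <= (/2) ^ q) by (apply pow_le; lra).
  assert (P2 : 0 < Rpower (INR N) (- (2 * gamma) * INR q)) by apply Rpower_pos.
  assert (P3 : 0 <= 2 ^ q) by (apply pow_le; lra).
  assert (HT : sumN N (fun u => F (INR u - INR v)) <= 2 * 2 ^ q * ((2 + / (1 - beta)) * X)).
  { eapply Rle_trans; [apply HS|]. rewrite Rmult_assoc.
    apply Rmult_le_compat_l; [lra|]. apply Rmult_le_compat_l; [lra|]. lra. }
  rewrite <- E.
  apply Rle_trans with ((/2) ^ q * Rpower (INR N) (- (2 * gamma) * INR q) * (2 * 2 ^ q * ((2 + / (1 - beta)) * X))).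
  - apply Rmult_le_compat_l; [apply Rmult_le_pos; lra|]. exact HT.
  - right. ring.
Qed.


Theorem mainTheorem8 (q : nat) (gamma : R) (p a b c d : nat)
  (hq : (2 <= q)%nat)
  (hg1 : 1 - / (2 * INR q) < gamma) (hg2 : gamma < 1)
  (hp : (p <= q - 2)%nat)
  (hab : (a + b = q - 1 - p)%nat) (hcd : (c + d = q - 1 - p)%nat) :
  exists C : R, forall N : nat, (1 <= N)%nat ->
    INR N ^ (4 * q - 4) *
    sumN N (fun i => sumN N (fun i' => sumN N (fun k => sumN N (fun k' =>
      ipH gamma N i i' ^ (p + 1) * ipH gamma N k k' ^ (p + 1) *
      ipH gamma N i k ^ a * ipH gamma N i k' ^ b *
      ipH gamma N i' k ^ c * ipH gamma N i' k' ^ d)))) <= C.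
Proof.
  assert (Hq : 2 <= INR q) by (apply (le_INR 2); auto).
  set (t := / (2 * INR q)) in hg1.
  assert (Ht : t * (2 * INR q) = 1) by (unfold t; field; lra).
  assert (Ht0 : 0 < t) by (unfold t; apply Rinv_0_lt_compat; lra).
  assert (Hg : 1/2 < gamma < 1) by nra.
  assert (Hb : 0 < (2 - 2 * gamma) * INR q < 1) by nra.
  destruct (row_bound gamma q Hg Hb) as [K [HK HrowK]].
  exists (15 * K ^ 2).
  intros N HN.
  set (T := K * Rpower (INR N) (1 - 2 * INR q)).
  set (Z := fun u v => Rabs (ipH gamma N u v) ^ q).
  assert (HZ : goodZ N Z T).
  { split; [|split].
    - intros; unfold Z; apply pow_le, Rabs_pos.
    - intros; unfold Z; rewrite ipH_sym; reflexivity.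
    - intros v Hv. apply HrowK; auto. }
  assert (Hpt : forall i i' k k',
    ipH gamma N i i' ^ (p + 1) * ipH gamma N k k' ^ (p + 1) *
    ipH gamma N i k ^ a * ipH gamma N i k' ^ b *
    ipH gamma N i' k ^ c * ipH gamma N i' k' ^ d <= PS Z i i' k k').
  { intros i i' k k'.
    eapply Rle_trans; [apply Rle_abs|].
    rewrite !Rabs_mult, <- !RPow_abs.
    eapply Rle_trans.
    - apply (six q); try apply Rabs_pos; lia.
    - unfold PS, pairs. simpl fold_right. unfold Zt, Z. lra. }
  assert (HS : S4 N (fun i i' k k' =>
    ipH gamma N i i' ^ (p + 1) * ipH gamma N k k' ^ (p + 1) *
    ipH gamma N i k ^ a * ipH gamma N i k' ^ b *
    ipH gamma N i' k ^ c * ipH gamma N i' k' ^ d) <= S4 N (PS Z)).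
  { unfold S4. apply sumN_le; intros. apply sumN_le; intros.
    apply sumN_le; intros. apply sumN_le; intros. apply Hpt. }
  pose proof (PS_bound N Z T HZ) as HB.
  change (sumN N (fun i => sumN N (fun i' => sumN N (fun k => sumN N (fun k' =>
      ipH gamma N i i' ^ (p + 1) * ipH gamma N k k' ^ (p + 1) *
      ipH gamma N i k ^ a * ipH gamma N i k' ^ b *
      ipH gamma N i' k ^ c * ipH gamma N i' k' ^ d)))))
    with (S4 N (fun i i' k k' =>
    ipH gamma N i i' ^ (p + 1) * ipH gamma N k k' ^ (p + 1) *
    ipH gamma N i k ^ a * ipH gamma N i k' ^ b *
    ipH gamma N i' k ^ c * ipH gamma N i' k' ^ d)).
  assert (HN1 : 1 <= INR N) by (apply (le_INR 1); auto).
  assert (HNp : 0 <= INR N ^ (4 * q - 4)) by (apply pow_le; lra).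
  eapply Rle_trans; [apply Rmult_le_compat_l; [exact HNp|]; eapply Rle_trans; [exact HS|exact HB]|].
  right.
  assert (Ex : INR N ^ (4 * q - 4) * INR N ^ 2 * Rpower (INR N) (1 - 2 * INR q) ^ 2 = 1).
  { rewrite <- !Rpower_pow by lra. rewrite Rpower_pow_q by lra.
    rewrite <- !Rpower_plus. rewrite minus_INR by lia. rewrite mult_INR.
    replace (INR 4 * INR q - INR 4 + INR 2 + (1 - 2 * INR q) * INR 2) with 0
      by (simpl; ring).
    apply Rpower_O. lra. }
  unfold T. transitivity (15 * K ^ 2 * (INR N ^ (4 * q - 4) * INR N ^ 2 * Rpower (INR N) (1 - 2 * INR q) ^ 2)); [ring|]. rewrite Ex. ring.
Qed.
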